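(* Let $K$ be an open Legendrian knot for which \begin{equation} d_{\mathcal{H}}(p,q)=d_K(p,q)\qquad\text{for any $p$, $q\in K\setminus\{\infty\}$}. \end{equation} Then, $K$ is an infinite $\mathbb{R}$-circle.
   Context: $\mathcal{H}=\mathbb{C}\times\mathbb{R}$ is the 3-dimensional Heisenberg group with coordinates $(x,y,u)$, group law $(x,y,u)\cdot(x',y',u')=(x+x',y+y',u+u'+\tfrac12(xy'-x'y))$, horizontal distribution spanned by $X=\partial_x-\tfrac12 y\,\partial_u$, $Y=\partial_y+\tfrac12 x\,\partial_u$ (orthonormal, norm $|\cdot|$). The Korányi distance is $d_{\mathcal{H}}(p,q)=\|p^{-1}q\|_{\mathcal{H}}$, $\|(x,y,u)\|_{\mathcal{H}}=\sqrt[4]{(x^2+y^2)^2+16u^2}$. An open Legendrian knot is a smooth embedded closed Legendrian curve in $\mathcal{H}\cup\{\infty\}\cong S^3$ passing through $\infty$; $d_K$ denotes arc-length distance along $K$. An $\mathbb{R}$-circle is the intersection of $\partial B^2_{\mathbb{C}}\cong\mathcal{H}\cup\{\infty\}$ with the closure of a complete totally geodesic totally real surface in the complex hyperbolic unit ball $B^2_{\mathbb{C}}$; it is infinite if it passes through $\infty$. Equivalently, infinite $\mathbb{R}$-circles are exactly the open Legendrian knots whose vertical projection $(x,y,u)\mapsto(x,y)$ is an affine line in $\mathbb{C}$, i.e., the lines $\{(x_0,y_0,u_0)+t(a,b,-\tfrac12(y_0a-x_0b)):t\in\mathbb{R}\}$ with $(a,b)\neq(0,0)$. *)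

(* Defs.v *)
From Stdlib Require Import Reals.
From Coquelicot Require Import Coquelicot.
Open Scope R_scope.

(* Points of the Heisenberg group H = C x R, coordinates (x, y, u). *)
Definition Hpt := (R * R * R)%type.

Definition hmul (p q : Hpt) : Hpt :=
  let '(x, y, u) := p in let '(x', y', u') := q in
  (x + x', y + y', u + u' + / 2 * (x * y' - x' * y)).

Definition hinv (p : Hpt) : Hpt :=
  let '(x, y, u) := p in (- x, - y, - u).

Definition koranyi_norm (p : Hpt) : R :=
  let '(x, y, u) := p in sqrt (sqrt ((x ^ 2 + y ^ 2) ^ 2 + 16 * u ^ 2)).

Definition koranyi_dist (p q : Hpt) : R := koranyi_norm (hmul (hinv p) q).

Definition curve (x y u : R -> R) (t : R) : Hpt := (x t, y t, u t).

(* Open Legendrian knot, described through a parametrization of K \ {oo}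
   by the real line:  smooth (C^infinity) coordinates, regular, injective,
   Legendrian (velocity in span{X,Y}, i.e. u' = (x y' - y x')/2),
   and going to oo at both ends (so that K = image ∪ {oo} is a closed curve
   in S^3 passing through oo). *)
Definition open_legendrian_knot (x y u : R -> R) : Prop :=
  (forall (n : nat) (t : R),
      ex_derive_n x n t /\ ex_derive_n y n t /\ ex_derive_n u n t) /\
  (forall t, Derive x t <> 0 \/ Derive y t <> 0) /\
  (forall s t, curve x y u s = curve x y u t -> s = t) /\
  (forall t, Derive u t = / 2 * (x t * Derive y t - y t * Derive x t)) /\
  filterlim (fun t => koranyi_norm (curve x y u t))
            (Rbar_locally p_infty) (Rbar_locally p_infty) /\
  filterlim (fun t => koranyi_norm (curve x y u t))
            (Rbar_locally m_infty) (Rbar_locally p_infty).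

(* Horizontal speed |gamma'(t)| (for a Legendrian curve, gamma' = x' X + y' Y). *)
Definition hspeed (x y : R -> R) (t : R) : R :=
  sqrt (Derive x t ^ 2 + Derive y t ^ 2).

(* Arc-length distance along K between gamma(s) and gamma(t) (the finite arc). *)
Definition arc_dist (x y : R -> R) (s t : R) : R :=
  Rabs (RInt (hspeed x y) s t).

(* Infinite R-circle: a line whose vertical projection is an affine line of C. *)
Definition R_line (x0 y0 u0 a b : R) (t : R) : Hpt :=
  (x0 + t * a, y0 + t * b, u0 - t * (/ 2 * (y0 * a - x0 * b))).

Definition is_infinite_R_circle (K : Hpt -> Prop) : Prop :=
  exists x0 y0 u0 a b : R, (a <> 0 \/ b <> 0) /\
    (forall p, K p <-> exists t, p = R_line x0 y0 u0 a b t).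

(* Main.v *)
Require Import Defs.
From Stdlib Require Import Reals Lra Psatz.
From Coquelicot Require Import Coquelicot.
Open Scope R_scope.

Lemma alg_key (p1 p2 X Y W L v : R) :
  0 < v -> v^2 = X^2 + Y^2 ->
  (p1^2+p2^2)^2 + 16 * W^2 = L^4 ->
  2 * (p1^2+p2^2) * (2*p1*X + 2*p2*Y) + 16 * W * (p1 * Y - p2 * X) = 4 * L^3 * v ->
  W = 0.
Proof.
  intros Hv Hv2 HQ HD.
  set (A := p1^2+p2^2) in *.
  set (B := p1*X+p2*Y). set (C := p1*Y-p2*X).
  assert (HBC : B^2 + C^2 = A * v^2) by (unfold B, C, A; rewrite Hv2; ring).
  assert (HE : A*B + 4*W*C = L^3 * v) by (unfold B, C; nra).
  assert (HCS : (A^2+16*W^2)*(B^2+C^2) - (A*B+4*W*C)^2 = (A*C - 4*W*B)^2) by ring.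
  rewrite HQ, HBC, HE in HCS.
  assert (Hle : L^6 * v^2 <= L^4 * A * v^2).
  { assert (0 <= (A*C - 4*W*B)^2) by (apply pow2_ge_0).
    replace (L^6*v^2) with ((L^3*v)^2) by ring. lra. }
  assert (HA : 0 <= A) by (unfold A; nra).
  destruct (Req_dec L 0) as [HL|HL].
  - subst L. assert (0 <= A^2) by (apply pow2_ge_0).
    assert (W^2 <= 0) by (simpl in HQ; lra).
    assert (0 <= W^2) by (apply pow2_ge_0). assert (W^2 = 0) by lra. nra.
  - assert (HL2' : 0 < L^2) by (rewrite <- Rsqr_pow2; apply Rlt_0_sqr; exact HL).
    assert (HL4 : 0 < L^4) by (replace (L^4) with (L^2*L^2) by ring; nra).
    assert (Hv2' : 0 < v^2) by nra.
    assert (HL2 : L^2 <= A).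
    { assert (0 < L^4 * v^2) by nra.
      assert (L^4 * v^2 * (L^2 - A) <= 0) by (replace (L^6) with (L^4*L^2) in Hle by ring; nra).
      destruct (Rle_dec (L^2) A); auto.
      assert (0 < L^4 * v^2 * (L^2 - A)) by (apply Rmult_lt_0_compat; lra). lra. }
    assert (L^4 <= A^2) by (replace (L^4) with (L^2*L^2) by ring; nra).
    assert (0 <= W^2) by (apply pow2_ge_0). assert (W^2 = 0) by lra. nra.
Qed.
Lemma abs_affine (c l d M : R) : Rabs l <= M -> Rabs (c + l * d) <= Rabs c + M * Rabs d.
Proof.
  intros H. eapply Rle_trans; [apply Rabs_triang|]. rewrite Rabs_mult.
  apply Rplus_le_compat_l. apply Rmult_le_compat_r; [apply Rabs_pos|exact H].
Qed.

Lemma norm_bound (x0 y0 u0 a b M : R) : exists N, forall l, Rabs l <= M ->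
  koranyi_norm (R_line x0 y0 u0 a b l) <= N.
Proof.
  set (k := - (/2 * (y0 * a - x0 * b))).
  set (X := Rabs x0 + M * Rabs a). set (Y := Rabs y0 + M * Rabs b). set (U := Rabs u0 + M * Rabs k).
  exists (sqrt (sqrt ((X^2 + Y^2)^2 + 16 * U^2))).
  intros l Hl. unfold koranyi_norm, R_line.
  apply sqrt_le_1_alt. apply sqrt_le_1_alt.
  assert (Hx : (x0 + l * a)^2 <= X^2) by (apply pow_maj_Rabs; apply abs_affine; exact Hl).
  assert (Hy : (y0 + l * b)^2 <= Y^2) by (apply pow_maj_Rabs; apply abs_affine; exact Hl).
  assert (Hu : (u0 - l * (/ 2 * (y0 * a - x0 * b)))^2 <= U^2).
  { apply pow_maj_Rabs. replace (u0 - l * (/ 2 * (y0 * a - x0 * b))) with (u0 + l * k) by (unfold k; ring).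
    apply abs_affine; exact Hl. }
  assert (Hs : ((x0 + l * a)^2 + (y0 + l * b)^2)^2 <= (X^2+Y^2)^2).
  { apply pow_maj_Rabs. rewrite Rabs_right; [lra|].
    pose proof (pow2_ge_0 (x0 + l * a)). pose proof (pow2_ge_0 (y0 + l * b)). lra. }
  lra.
Qed.

Section S.
Variables x y u : R -> R.
Hypothesis HK : open_legendrian_knot x y u.

Lemma dx1 t : ex_derive x t.
Proof. destruct HK as [H _]. destruct (H 1%nat t) as [A _]. exact A. Qed.
Lemma dy1 t : ex_derive y t.
Proof. destruct HK as [H _]. destruct (H 1%nat t) as [_ [A _]]. exact A. Qed.
Lemma du1 t : ex_derive u t.
Proof. destruct HK as [H _]. destruct (H 1%nat t) as [_ [_ A]]. exact A. Qed.
Lemma dx2 t : ex_derive (Derive x) t.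
Proof. destruct HK as [H _]. destruct (H 2%nat t) as [A _]. exact A. Qed.
Lemma dy2 t : ex_derive (Derive y) t.
Proof. destruct HK as [H _]. destruct (H 2%nat t) as [_ [A _]]. exact A. Qed.

Lemma speed_pos t : 0 < Derive x t ^2 + Derive y t ^2.
Proof.
  destruct HK as [_ [H _]]. destruct (H t) as [A|A].
  - assert (0 < Derive x t ^2) by (rewrite <- Rsqr_pow2; apply Rlt_0_sqr; exact A).
    assert (0 <= Derive y t ^2) by apply pow2_ge_0. lra.
  - assert (0 < Derive y t ^2) by (rewrite <- Rsqr_pow2; apply Rlt_0_sqr; exact A).
    assert (0 <= Derive x t ^2) by apply pow2_ge_0. lra.
Qed.

Lemma hspeed_cont t : continuous (hspeed x y) t.
Proof.
  apply (@ex_derive_continuous R_AbsRing R_NormedModule). unfold hspeed.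
  auto_derive. repeat split; try apply dx2; try apply dy2. apply speed_pos.
Qed.

Lemma hspeed_RInt a b : ex_RInt (hspeed x y) a b.
Proof. apply (@ex_RInt_continuous R_CompleteNormedModule). intros; apply hspeed_cont. Qed.

Lemma L_derive s t : is_derive (fun t => RInt (hspeed x y) s t) t (hspeed x y t).
Proof.
  apply is_derive_RInt with (a := s).
  - apply filter_forall. intros b. apply RInt_correct. apply hspeed_RInt.
  - apply hspeed_cont.
Qed.


Hypothesis HD : forall s t : R,
      koranyi_dist (curve x y u s) (curve x y u t) = arc_dist x y s t.

Lemma mainlem s t : u t - u s - /2*(x s * y t - x t * y s) = 0 /\
  ((x t - x s)^2+(y t - y s)^2)^2 = (RInt (hspeed x y) s t)^4.
Proof.
  set (L := fun t => RInt (hspeed x y) s t).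
  set (Q := fun t => ((x t - x s)^2+(y t - y s)^2)^2 + 16 * (u t - u s - /2*(x s * y t - x t * y s))^2).
  assert (HQ : forall t, Q t = L t ^ 4).
  { intros r. specialize (HD s r). unfold koranyi_dist, koranyi_norm, hmul, hinv, curve, arc_dist in HD.
    simpl in HD.
    match type of HD with sqrt (sqrt ?Z) = _ =>
      assert (EZ : Z = Q r) by (unfold Q; ring); rewrite EZ in HD end.
    assert (HQ0 : 0 <= Q r) by (unfold Q; apply Rplus_le_le_0_compat;
       [apply pow2_ge_0 | apply Rmult_le_pos; [lra | apply pow2_ge_0]]).
    assert (H1 : sqrt (Q r) = L r ^ 2).
    { rewrite <- (sqrt_sqrt (sqrt (Q r))) by apply sqrt_pos. rewrite HD.
      rewrite <- pow2_abs. unfold L. ring. }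
    rewrite <- (sqrt_sqrt (Q r)) by exact HQ0. rewrite H1. ring. }
  set (X' := Derive x t). set (Y' := Derive y t). set (U' := Derive u t).
  assert (Hq : is_derive Q t (2*((x t - x s)^2+(y t - y s)^2)*(2*(x t - x s)*X' + 2*(y t - y s)*Y')
     + 32*(u t - u s - /2*(x s * y t - x t * y s))*(U' - /2*(x s * Y' - X' * y s)))).
  { unfold Q. auto_derive.
    - repeat split; try apply dx1; try apply dy1; try apply du1.
    - unfold X', Y', U'.
      replace (Derive (fun r => x r) t) with (Derive x t) by reflexivity.
      replace (Derive (fun r => y r) t) with (Derive y t) by reflexivity.
      replace (Derive (fun r => u r) t) with (Derive u t) by reflexivity.
      field. }
  assert (HL4 : is_derive Q t (INR 4 * hspeed x y t * L t ^ 3)).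
  { apply is_derive_ext with (f := fun r => L r ^ 4).
    - intros r; rewrite HQ; reflexivity.
    - apply (is_derive_pow L 4 t). apply L_derive. }
  apply is_derive_unique in Hq. apply is_derive_unique in HL4.
  rewrite Hq in HL4. clear Hq.
  assert (HU : U' = /2 * (x t * Y' - y t * X')).
  { destruct HK as [_ [_ [_ [H _]]]]. apply H. }
  assert (Hv : hspeed x y t ^ 2 = X'^2 + Y'^2).
  { unfold hspeed. rewrite <- Rsqr_pow2. rewrite Rsqr_sqrt. reflexivity.
    pose proof (speed_pos t). lra. }
  assert (Hvp : 0 < hspeed x y t) by (unfold hspeed; apply sqrt_lt_R0; apply speed_pos).
  assert (W0 : u t - u s - / 2 * (x s * y t - x t * y s) = 0).
  { apply (alg_key (x t - x s) (y t - y s) X' Y' _ (L t) (hspeed x y t) Hvp Hv).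
    - rewrite <- HQ. unfold Q. reflexivity.
    - rewrite HU in HL4. simpl INR in HL4. 
      replace (4 * L t ^ 3 * hspeed x y t) with ((1 + 1 + 1 + 1) * hspeed x y t * L t ^ 3) by ring.
      rewrite <- HL4. field. }
  split; [exact W0|]. rewrite <- HQ. unfold Q. rewrite W0. ring.
Qed.

Definition Lf s t := RInt (hspeed x y) s t.

Lemma dist_eq s t : (x t - x s)^2 + (y t - y s)^2 = (Lf s t)^2.
Proof.
  destruct (mainlem s t) as [_ H]. unfold Lf.
  set (A := (x t - x s)^2 + (y t - y s)^2) in *.
  set (L := RInt (hspeed x y) s t) in *.
  assert (0 <= A) by (unfold A; pose proof (pow2_ge_0 (x t - x s)); pose proof (pow2_ge_0 (y t - y s)); lra).
  assert (0 <= L^2) by apply pow2_ge_0.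
  assert ((A - L^2)*(A + L^2) = 0) by (replace ((A - L^2)*(A + L^2)) with (A^2 - L^4) by ring; lra).
  apply Rmult_integral in H2. destruct H2; [lra|].
  assert (A = 0) by lra. assert (L^2 = 0) by lra. lra.
Qed.

Lemma Lpos s t : s <= t -> 0 <= Lf s t.
Proof.
  intros H. unfold Lf. apply RInt_ge_0; auto. apply hspeed_RInt.
  intros; unfold hspeed; apply sqrt_pos.
Qed.

Lemma chasles s r t : Lf s r + Lf r t = Lf s t.
Proof.
  unfold Lf. rewrite <- (RInt_Chasles (hspeed x y) s r t) by apply hspeed_RInt. reflexivity.
Qed.

Lemma tri s r t : s <= r -> r <= t ->
  ((x r - x s) * (y t - y r) - (y r - y s) * (x t - x r) = 0) /\ (0 <= (x r - x s) * (x t - x r) + (y r - y s) * (y t - y r)).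
Proof.
  intros H1 H2.
  pose proof (dist_eq s r) as E1. pose proof (dist_eq r t) as E2. pose proof (dist_eq s t) as E3.
  rewrite <- (chasles s r t) in E3.
  pose proof (Lpos s r H1) as P1. pose proof (Lpos r t H2) as P2.
  set (A1 := x r - x s) in *. set (A2 := y r - y s) in *.
  set (B1 := x t - x r) in *. set (B2 := y t - y r) in *.
  set (a := Lf s r) in *. set (b := Lf r t) in *.
  replace (x t - x s) with (A1 + B1) in E3 by (unfold A1, B1; ring).
  replace (y t - y s) with (A2 + B2) in E3 by (unfold A2, B2; ring).
  assert (Hdot : A1*B1 + A2*B2 = a*b) by nra.
  split; [|rewrite Hdot; apply Rmult_le_pos; auto].
  assert (Hc : (A1*B2 - A2*B1)^2 = 0).
  { replace ((A1*B2 - A2*B1)^2) with ((A1^2+A2^2)*(B1^2+B2^2) - (A1*B1+A2*B2)^2) by ring.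
    rewrite E1, E2, Hdot. ring. }
  nra.
Qed.

Lemma final : is_infinite_R_circle (fun p => exists t, p = curve x y u t).
Proof.
  set (a := x 1 - x 0). set (b := y 1 - y 0).
  assert (HW : forall s t, u t = u s + /2*(x s * y t - x t * y s)).
  { intros s t. destruct (mainlem s t) as [H _]. lra. }
  assert (Hab : a <> 0 \/ b <> 0).
  { destruct (Req_dec a 0) as [Ha|Ha]; [|now left].
    destruct (Req_dec b 0) as [Hb|Hb]; [|now right].
    exfalso. destruct HK as [_ [_ [Hinj _]]].
    assert (E : curve x y u 1 = curve x y u 0).
    { unfold curve. rewrite (HW 0 1).
      replace (x 1) with (x 0) by (unfold a in Ha; lra).
      replace (y 1) with (y 0) by (unfold b in Hb; lra).
      f_equal. ring. }
    apply Hinj in E. lra. }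
  set (D := a^2 + b^2).
  assert (HD0 : 0 < D).
  { unfold D. destruct Hab as [H|H].
    - assert (0 < a^2) by (rewrite <- Rsqr_pow2; apply Rlt_0_sqr; exact H).
      pose proof (pow2_ge_0 b). lra.
    - assert (0 < b^2) by (rewrite <- Rsqr_pow2; apply Rlt_0_sqr; exact H).
      pose proof (pow2_ge_0 a). lra. }
  assert (Hcol : forall t, a*(y t - y 0) - b*(x t - x 0) = 0).
  { intros t. destruct (Rlt_or_le t 0) as [Ht|Ht].
    - destruct (tri t 0 1) as [H _]; try lra.
      transitivity ((x 0 - x t) * (y 1 - y 0) - (y 0 - y t) * (x 1 - x 0)); [unfold a, b; ring|exact H].
    - destruct (Rle_or_lt t 1) as [Ht1|Ht1].
      + destruct (tri 0 t 1) as [H _]; try lra.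
        transitivity (-((x t - x 0) * (y 1 - y t) - (y t - y 0) * (x 1 - x t))); [unfold a, b; ring|rewrite H; ring].
      + destruct (tri 0 1 t) as [H _]; try lra.
        transitivity ((x 1 - x 0) * (y t - y 1) - (y 1 - y 0) * (x t - x 1)); [unfold a, b; ring|exact H]. }
  set (lam := fun t => (a*(x t - x 0) + b*(y t - y 0))/D).
  assert (Hcurve : forall t, curve x y u t = R_line (x 0) (y 0) (u 0) a b (lam t)).
  { intros t. pose proof (Hcol t) as Hc.
    assert (Kx : a*(a*(x t - x 0) + b*(y t - y 0)) = (x t - x 0)*D).
    { transitivity ((x t - x 0)*D + b*(a*(y t - y 0) - b*(x t - x 0))); [unfold D; ring| rewrite Hc; ring]. }
    assert (Ky : b*(a*(x t - x 0) + b*(y t - y 0)) = (y t - y 0)*D).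
    { transitivity ((y t - y 0)*D - a*(a*(y t - y 0) - b*(x t - x 0))); [unfold D; ring| rewrite Hc; ring]. }
    assert (Ex : x t = x 0 + lam t * a).
    { unfold lam. replace ((a * (x t - x 0) + b * (y t - y 0)) / D * a) with
        (a*(a * (x t - x 0) + b * (y t - y 0)) / D) by (field; lra).
      rewrite Kx. field. lra. }
    assert (Ey : y t = y 0 + lam t * b).
    { unfold lam. replace ((a * (x t - x 0) + b * (y t - y 0)) / D * b) with
        (b*(a * (x t - x 0) + b * (y t - y 0)) / D) by (field; lra).
      rewrite Ky. field. lra. }
    unfold curve, R_line. rewrite (HW 0 t). rewrite Ex, Ey. f_equal; ring. }
  exists (x 0), (y 0), (u 0), a, b. split; [exact Hab|].
  intros p. split.
  - intros [t ->]. exists (lam t). apply Hcurve.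
  - intros [mu ->].
    assert (Ecomp : forall t, x t = x 0 + lam t * a /\ y t = y 0 + lam t * b).
    { intros t. pose proof (Hcurve t) as E. unfold curve, R_line in E. injection E as E1 E2 E3. split; assumption. }
    assert (Hsp : forall t, 1 < t -> 1 <= lam t).
    { intros t Ht. destruct (tri 0 1 t) as [_ H]; try lra.
      destruct (Ecomp t) as [E1 E2].
      replace (x t - x 1) with ((lam t - 1) * a) in H by (rewrite E1; unfold a; ring).
      replace (y t - y 1) with ((lam t - 1) * b) in H by (rewrite E2; unfold b; ring).
      fold a b in H.
      replace (a * ((lam t - 1) * a) + b * ((lam t - 1) * b)) with ((lam t - 1) * D) in H by (unfold D; ring).
      destruct (Rle_or_lt 1 (lam t)) as [|Hl]; auto.
      assert ((1 - lam t) * D > 0) by (apply Rmult_lt_0_compat; lra). lra. }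
    assert (Hsm : forall t, t < 0 -> lam t <= 0).
    { intros t Ht. destruct (tri t 0 1) as [_ H]; try lra.
      destruct (Ecomp t) as [E1 E2]. fold a b in H.
      replace (x 0 - x t) with (- lam t * a) in H by (rewrite E1; ring).
      replace (y 0 - y t) with (- lam t * b) in H by (rewrite E2; ring).
      replace (- lam t * a * a + - lam t * b * b) with (- lam t * D) in H by (unfold D; ring).
      destruct (Rle_or_lt (lam t) 0) as [|Hl]; auto.
      assert (lam t * D > 0) by (apply Rmult_lt_0_compat; lra). lra. }
    assert (Hcont : continuity lam).
    { intros t. apply continuity_pt_filterlim.
      apply (@ex_derive_continuous R_AbsRing R_NormedModule).
      unfold lam. auto_derive. repeat split; try apply dx1; try apply dy1. }
    destruct (norm_bound (x 0) (y 0) (u 0) a b (Rabs mu)) as [N HN].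
    assert (HNb : forall t, N < koranyi_norm (curve x y u t) -> Rabs mu < Rabs (lam t)).
    { intros t Ht. destruct (Rle_or_lt (Rabs (lam t)) (Rabs mu)) as [Hl|Hl]; auto.
      specialize (HN _ Hl). rewrite <- Hcurve in HN. lra. }
    destruct HK as [_ [_ [_ [_ [Hp Hm]]]]].
    assert (Hp' : Rbar_locally p_infty (fun t => N < koranyi_norm (curve x y u t))).
    { apply Hp. exists N. auto. }
    assert (Hm' : Rbar_locally m_infty (fun t => N < koranyi_norm (curve x y u t))).
    { apply Hm. exists N. auto. }
    destruct Hp' as [T1 HT1]. destruct Hm' as [T2 HT2].
    set (tp := Rmax T1 1 + 1). set (tm := Rmin T2 0 - 1).
    assert (Htp1 : 1 < tp) by (unfold tp; pose proof (Rmax_r T1 1); lra).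
    assert (Htp2 : T1 < tp) by (unfold tp; pose proof (Rmax_l T1 1); lra).
    assert (Htm1 : tm < 0) by (unfold tm; pose proof (Rmin_r T2 0); lra).
    assert (Htm2 : tm < T2) by (unfold tm; pose proof (Rmin_l T2 0); lra).
    pose proof (HNb tp (HT1 tp Htp2)) as Bp. pose proof (HNb tm (HT2 tm Htm2)) as Bm.
    pose proof (Hsp tp Htp1) as Sp. pose proof (Hsm tm Htm1) as Sm.
    rewrite (Rabs_right (lam tp)) in Bp by lra.
    rewrite (Rabs_left1 (lam tm)) in Bm by lra.
    pose proof (Rle_abs mu). pose proof (Rabs_maj2 mu).
    destruct (IVT_gen lam tm tp mu Hcont) as [t [_ Ht]].
    { rewrite Rmin_left by lra. rewrite Rmax_right by lra. lra. }
    exists t. rewrite Hcurve, Ht. reflexivity.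
Qed.
End S.

Theorem proposition4p2 (x y u : R -> R) :
  open_legendrian_knot x y u ->
  (forall s t : R,
      koranyi_dist (curve x y u s) (curve x y u t) = arc_dist x y s t) ->
  is_infinite_R_circle (fun p => exists t, p = curve x y u t).
Proof.
  intros HK HD. exact (final x y u HK HD).
Qed.
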